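(* Let $f_0$ be an arithmetic function with $f_0(1)=1$ and let $m>1$. Let $\alpha$ be a finite alphabet and $\mathcal R$ a set of words over $\alpha$ (the $\mathcal R$-restricted words) such that for every $n\ge1$, $f_{m-1}(n)$ equals the number of words of length $n-1$ over $\alpha$ belonging to $\mathcal R$. Let $x$ be a letter not in $\alpha$. Then for all $1\le k\le n$, $c_m(n,k)$ equals the number of $\mathcal R$-restricted words of length $n-1$ over $\alpha\cup\{x\}$ in which $x$ appears exactly $k-1$ times.
   Context: An arithmetic function is a function $f_0:\{1,2,\ldots\}\to\mathbb{C}$. For $m\ge 1$, $f_m$ is the invert transform of $f_{m-1}$, i.e. $f_m(n)=f_{m-1}(n)+\sum_{i=1}^{n-1}f_{m-1}(i)f_m(n-i)$ for $n\ge1$. For $m\ge1$ the numbers $c_m(n,k)$, $0\le k\le n$, are defined by $c_m(0,0)=1$, $c_m(n,0)=0$ for $n\ge1$, and $c_m(n,k)=\sum_{i=1}^{n-k+1}f_{m-1}(i)\,c_m(n-i,k-1)$ for $1\le k\le n$. Words may be empty (length $0$). The restriction $\mathcal R$ concerns only letters of $\alpha$: a word over $\alpha\cup\{x\}$ with exactly $k-1$ occurrences of $x$ is written uniquely as $w_1\,x\,w_2\,x\cdots x\,w_k$ with each $w_j$ a (possibly empty) word over $\alpha$, and it is called $\mathcal R$-restricted if every $w_j$ belongs to $\mathcal R$. *)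

(* Defs.v *)
From mathcomp Require Import all_boot all_order all_algebra.
From mathcomp Require Import complex.
From mathcomp Require Import reals.
Set Implicit Arguments. Unset Strict Implicit. Unset Printing Implicit Defensive.
Import Order.TTheory GRing.Theory Num.Theory.
Local Open Scope ring_scope.

(* Arithmetic functions {1,2,...} -> C are represented as nat -> C;
   the value at 0 is irrelevant. *)
Section Defs.
Variable C : comRingType.

Fixpoint invert_aux (g : nat -> C) (fuel n : nat) : C :=
  match fuel with
  | 0 => 0
  | fuel'.+1 => g n + \sum_(1 <= i < n) g i * invert_aux g fuel' (n - i)
  end.

Definition invert (g : nat -> C) (n : nat) : C := invert_aux g n n.

Definition f_iter (f0 : nat -> C) (m : nat) : nat -> C := iter m invert f0.

Fixpoint c_aux (g : nat -> C) (n k : nat) : C :=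
  match k with
  | 0 => (n == 0%N)%:R
  | k'.+1 => \sum_(1 <= i < (n - k).+2) g i * c_aux g (n - i) k'
  end.

Definition c_num (f0 : nat -> C) (m n k : nat) : C := c_aux (f_iter f0 m.-1) n k.
End Defs.

(* Words over alpha ∪ {x} are seq (option T), with x := None.
   blocks w = [w_1; ...; w_k], the maximal x-free factors, w = w_1 x w_2 x ... x w_k. *)
Fixpoint blocks (T : Type) (w : seq (option T)) : seq (seq T) :=
  match w with
  | [::] => [:: [::]]
  | None :: w' => [::] :: blocks w'
  | Some a :: w' =>
      match blocks w' with
      | b :: bs => (a :: b) :: bs
      | [::] => [:: [:: a]]
      end
  end.

Definition restricted (T : Type) (R : pred (seq T)) (w : seq (option T)) : bool :=
  all R (blocks w).

(* Main.v *)
Require Import Defs.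
From mathcomp Require Import all_boot all_order all_algebra.
From mathcomp Require Import complex.
From mathcomp Require Import reals.
From mathcomp Require Import zify.
Set Implicit Arguments. Unset Strict Implicit.
Import Order.TTheory GRing.Theory Num.Theory.
Section Cnt.
Variable X : finType.

Lemma sum0 (F : seq X -> nat) : \sum_(t : 0.-tuple X) F t = F [::].
Proof.
rewrite (eq_bigr (fun _ => F [::])); last by move=> t _; rewrite tuple0.
by rewrite sum_nat_const card_tuple expn0 mul1n.
Qed.

Lemma sumS L (F : seq X -> nat) : \sum_(t : L.+1.-tuple X) F t =
  \sum_(a : X) \sum_(t : L.-tuple X) F (a :: t).
Proof.
rewrite (reindex (fun p : X * L.-tuple X => [tuple of p.1 :: p.2])) /=; last first.
  exists (fun t : L.+1.-tuple X => (thead t, [tuple of behead t])).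
    move=> [a t] _ /=; rewrite theadE; congr (_, _); exact: val_inj.
  by move=> t _; case/tupleP: t => a u; apply: val_inj.
rewrite -(pair_big predT predT (fun a (t : L.-tuple X) => F (a :: t))) /=.
by apply: eq_bigr => a _; apply: eq_bigl.
Qed.
End Cnt.

Lemma sum_opt (T : finType) (F : option T -> nat) :
  \sum_(a : option T) F a = F None + \sum_(b : T) F (Some b).
Proof.
rewrite (bigD1 None) //=; congr (_ + _).
rewrite (reindex_omap Some (fun x : option T => x)) /=; last by case.
by apply: eq_bigl => b; rewrite eqxx.
Qed.

Section Blocks.
Variable T : Type.
Definition bh (w : seq (option T)) := head [::] (blocks w).
Definition bt (w : seq (option T)) := behead (blocks w).

Lemma blocksE w : blocks w = bh w :: bt w.
Proof.
rewrite /bh /bt; elim: w => [|[a|] w IH] //=.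
by rewrite IH.
Qed.

Lemma bh_some a w : bh (Some a :: w) = a :: bh w.
Proof. by rewrite /bh /= blocksE. Qed.
Lemma bt_some a w : bt (Some a :: w) = bt w.
Proof. by rewrite /bt /= blocksE. Qed.
End Blocks.

Section Main.
Variables (T : finType) (R : pred (seq T)).

Definition Gp L j p := \sum_(t : L.-tuple (option T))
  [&& count_mem None t == j, R (p ++ bh t) & all R (bt t)] : nat.
Definition Hp L p := \sum_(t : L.-tuple T) R (p ++ t) : nat.

Lemma Gp0 j p : Gp 0 j p = (j == 0) && R p.
Proof. rewrite /Gp (sum0 (fun t => [&& count_mem None t == j, R (p ++ bh t) & all R (bt t)])) /=.
by rewrite /bh /= cats0 andbT eq_sym. Qed.

Lemma GpS L j p : Gp L.+1 j p =
  (if j is j'.+1 then R p * Gp L j' [::] else 0) + \sum_(b : T) Gp L j (rcons p b).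
Proof.
rewrite /Gp (sumS _ (fun t => [&& count_mem None t == j, R (p ++ bh t) & all R (bt t)])).
rewrite sum_opt; congr (_ + _).
  case: j => [|j].
    by apply: big1 => t _.
  rewrite big_distrr /=; apply: eq_bigr => t _.
  rewrite /bh /bt /= -/(bh t) -/(bt t) blocksE /= cats0 eqSS.
  by case: (R p); case: (count_mem None t == j); case: (R (bh t)); rewrite /= ?mul1n ?mul0n.
apply: eq_bigr => b _; apply: eq_bigr => t _.
by rewrite bh_some bt_some /= cat_rcons.
Qed.

Lemma Hp0 p : Hp 0 p = R p.
Proof. by rewrite /Hp (sum0 (fun t => (R (p ++ t) : nat))) cats0. Qed.

Lemma HpS L p : Hp L.+1 p = \sum_(b : T) Hp L (rcons p b).
Proof.
rewrite /Hp (sumS _ (fun t => (R (p ++ t) : nat))).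
by apply: eq_bigr => b _; apply: eq_bigr => t _; rewrite cat_rcons.
Qed.

Lemma GH0 L p : Gp L 0 p = Hp L p.
Proof.
elim: L p => [|L IH] p; first by rewrite Gp0 Hp0.
by rewrite GpS HpS add0n; apply: eq_bigr => b _; rewrite IH.
Qed.

Lemma Gsmall L j p : (L < j)%N -> Gp L j p = 0.
Proof.
move=> Lj; apply: big1 => t _.
have : (count_mem None t <= L)%N by rewrite -{2}(size_tuple t) count_size.
by case: eqP => // ->; rewrite leqNgt Lj.
Qed.

Lemma GH L j p : Gp L j.+1 p = \sum_(l < L) Hp l p * Gp (L - l.+1) j [::].
Proof.
elim: L p => [|L IH] p; first by rewrite Gp0 big_ord0.
rewrite GpS big_ord_recl Hp0 subn1 /=; congr (_ + _).
under eq_bigr => b _ do rewrite IH.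
rewrite exchange_big /=; apply: eq_bigr => l _.
by rewrite HpS big_distrl /= subSS.
Qed.

End Main.

Local Open Scope ring_scope.
Local Open Scope complex_scope.

Theorem proposition14 (Rr : realType) (f0 : nat -> Rr[i]) (m : nat)
  (T : finType) (R : pred (seq T)) :
  f0 1%N = 1 -> (1 < m)%N ->
  (forall n : nat, (1 <= n)%N ->
     f_iter f0 m.-1 n = (#|[pred w : (n.-1).-tuple T | R w]|)%:R) ->
  forall n k : nat, (1 <= k <= n)%N ->
    c_num f0 m n k =
    (#|[pred w : (n.-1).-tuple (option T) |
         (count_mem None w == k.-1) && restricted R w]|)%:R.
Proof.
move=> _ _ hf n k /andP [k1 kn].
set g := f_iter f0 m.-1 in hf *.
have hg : forall n, (1 <= n)%N -> g n = (Hp R n.-1 [::])%:R.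
  move=> n' n1; rewrite hf // -sum1_card big_mkcond /=.
  by congr (_%:R); apply: eq_bigr => t _; rewrite !inE; case: (R t).
have -> : #|[pred w : (n.-1).-tuple (option T) |
         (count_mem None w == k.-1) && restricted R w]| = Gp R n.-1 k.-1 [::].
  rewrite -sum1_card big_mkcond /=; apply: eq_bigr => t _.
  rewrite !inE /restricted blocksE /= andbA.
  by case: (_ && _).
rewrite /c_num -/g.
elim: k k1 n kn => [//|k IH] _ n kn.
case: k IH kn => [|k] IH kn.
  rewrite /= subn1 prednK //.
  rewrite big_nat_recr //= subnn /= mulr1 big_nat big1 ?add0r.
    by rewrite hg // GH0.
  move=> i /andP [_ iltn]; rewrite subn_eq0 leqNgt iltn /= mulr0 //.
have cS : forall n k, c_aux g n k.+1 =
    \sum_(1 <= i < (n - k.+1).+2) g i * c_aux g (n - i) k by [].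
rewrite cS big_add1 GH.
rewrite (eq_big_nat _ _ (F2 := fun i => (Hp R i [::] * Gp R (n.-1 - i.+1) k [::])%:R)); last first.
  move=> i /andP [_ Hi]; rewrite hg // IH //; last by simpl in Hi; lia.
  by rewrite natrM; have -> : ((n - i.+1).-1 = n.-1 - i.+1)%N by lia.
rewrite -natr_sum; congr (_%:R).
rewrite -(big_mkord xpredT (fun i => Hp R i [::] * Gp R (n.-1 - i.+1) k [::])%N).
rewrite [RHS](big_cat_nat _ (n := (n - k.+2).+1)) /=; [|lia|lia].
rewrite [X in (_ = _ + X)%N](_ : _ = 0%N) ?addn0 //.
rewrite big_nat_cond; apply: big1 => i /andP [/andP [H1 H2] _].
by rewrite Gsmall ?muln0 //; lia.
Qed.
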